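(* Assume the setting of the context and suppose Assumption (A4) holds. Let $c_1$ be the constant of the lower bound $d_{G^n}(x,y)\ge c_1\alpha(n)d_E(x,y)$ in (A4)(a). Then for every $r,\varepsilon>0$ there exist a finite set $\mathcal{X}\subseteq\overline{B}_F(\rho,r/c_1)\cap F^*$ and an integer $n_0$ such that $(B_{G^n}(g_n(x),\alpha(n)\varepsilon))_{x\in\mathcal{X}}$ is a cover of $B_{G^n}(\rho,\alpha(n)r)$ whenever $n\geq n_0$.
   Context: Let $(E,d_E)$ be a metric space and $F\subseteq E$ such that $F\cap\overline{B}_E(x,r)$ is compact for all $x\in E$, $r>0$ ($\overline{B}_E$, $B_E$ closed and open balls in $E$). Let $d_F:=d_E|_{F\times F}$, $B_F(x,r)$, $\overline{B}_F(x,r)$ open and closed balls in $(F,d_F)$, and $\rho\in F$. For a locally finite connected graph $G$ with at least two vertices: $d_G$ is the shortest-path metric, $B_G(x,r)$ the open $d_G$-ball; $\mu^G$ a symmetric weight with $\mu^G_{xy}>0$ iff $\{x,y\}$ is an edge; $X^G$ the discrete time simple random walk with $P_G(x,y)=\mu^G_{xy}/\sum_z\mu^G_{xz}$; generator $\mathcal{L}_Gf(x)=\sum_yP_G(x,y)(f(y)-f(x))$. Parabolic Harnack inequality (PHI): with $Q_G(x,R,T):=[0,T]\times B_G(x,R)$, $Q^-_G:=[\frac14T,\frac12T]\times B_G(x,\frac12R)$, $Q^+_G:=[\frac34T,T)\times B_G(x,\frac12R)$, a function $u$ on $([0,T]\cap\mathbb{Z})\times B_G(x,R+1)$ is caloric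 on $Q_G(x,R,T)$ if $u(n+1,y)-u(n,y)=\mathcal{L}_Gu(n,y)$ for integers $0\le n\le T-1$, $y\in B_G(x,R)$; PHI with constant $C_H$ holds for $Q_G(x,R,T)$ if every non-negative caloric $u$ on it satisfies $\sup_{Q^-_G}\hat u\le C_H\inf_{Q^+_G}\hat u$, $\hat u(n,y):=u(n+1,y)+u(n,y)$. $(G^n)_{n\ge1}$ are such graphs with $V(G^n)\subseteq E$ and distinguished vertex $\rho$. $(\alpha(n)),(\gamma(n))$ are non-negative sequences diverging to $\infty$. For $x\in E$, $g_n(x)$ is a point of $V(G^n)$ minimising $d_E(x,\cdot)$. Assumption (A4): for some $\kappa\ge2$ and $C_H<\infty$: (a) there is $c_1>0$ with $d_{G^n}(x,y)\ge c_1\alpha(n)d_E(x,y)$ for all $x,y\in V(G^n)$, $n\ge1$, and a non-negative $\tilde\alpha(n)=o(\alpha(n))$ such that for each $r>0$ there are $c_2<\infty$, $n_0$ with $d_{G^n}(x,y)\le c_2\alpha(n)d_E(x,y)+\tilde\alpha(n)$ for all $x,y\in V(G^n)\cap B_E(\rho,r)$, $n\ge n_0$; (b) for every $r>0$, $V(G^n)\cap\overline{B}_E(\rho,r)\to\overline{B}_F(\rho,r)$ in the Hausdorff topology on non-empty compact subsets of $(E,d_E)$; (c) for every $x\in V(G^n)$, $n\ge1$, there is a positive integer $s_{G^n}(x)$ such that PHI with constant $C_H$ holds for $Q_{G^n}(x,R,R^\kappa)$ for all $R\ge s_{G^n}(x)$, and there is a dense subset $F^*\subseteq F$ with $\alpha(n)^{-1}s_{G^n}(g_n(x))\to0$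 for every $x\in F^*$; (d) $\alpha(n)^\kappa=O(\gamma(n))$. *)

(* Defs.v *)
From Stdlib Require Import Reals Lra Lia List ClassicalEpsilon.
Open Scope R_scope.
Set Implicit Arguments.

Section Defs.
Variable E : Type.

Definition is_metric (d : E -> E -> R) : Prop :=
  (forall x y, 0 <= d x y) /\
  (forall x y, d x y = 0 <-> x = y) /\
  (forall x y, d x y = d y x) /\
  (forall x y z, d x z <= d x y + d y z).

Definition is_open (d : E -> E -> R) (U : E -> Prop) : Prop :=
  forall x, U x -> exists e, 0 < e /\ forall y, d x y < e -> U y.

Definition compact_set (d : E -> E -> R) (A : E -> Prop) : Prop :=
  forall (I : Type) (U : I -> E -> Prop),
    (forall i, is_open d (U i)) ->
    (forall x, A x -> exists i, U i x) ->
    exists l : list I, forall x, A x -> exists i, In i l /\ U i x.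

(** Convergence A n -> B in the Hausdorff topology on non-empty compact
    subsets: all sets are non-empty compact, and the Hausdorff distance
    tends to 0. *)
Definition hausdorff_cv (d : E -> E -> R) (A : nat -> E -> Prop) (B : E -> Prop)
  : Prop :=
  (forall n, compact_set d (A n) /\ exists a, A n a) /\
  (compact_set d B /\ exists b, B b) /\
  (forall eps, 0 < eps -> exists N, forall n, (N <= n)%nat ->
     (forall a, A n a -> exists b, B b /\ d a b < eps) /\
     (forall b, B b -> exists a, A n a /\ d a b < eps)).

Record graph := mkGraph {
  gV : E -> Prop;
  gnb : E -> list E;
  gmu : E -> E -> R }.

Definition gadj (G : graph) (x y : E) : Prop := In y (gnb G x).

Inductive walk (G : graph) : E -> E -> nat -> Prop :=
| walk0 x : gV G x -> walk G x x 0
| walkS x z y k : gV G x -> gadj G x z -> walk G z y k -> walk G x y (S k).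

(** Locally finite (built-in: finite neighbour lists), simple, undirected,
    connected graph with at least two vertices, and a symmetric weight
    mu with mu_xy > 0 iff {x,y} is an edge. *)
Definition wf_graph (G : graph) : Prop :=
  (forall x, gV G x -> NoDup (gnb G x)) /\
  (forall x y, gV G x -> gadj G x y -> gV G y /\ y <> x /\ gadj G y x) /\
  (forall x y, gV G x -> gV G y -> exists k, walk G x y k) /\
  (exists x y, gV G x /\ gV G y /\ x <> y) /\
  (forall x y, gV G x -> gV G y ->
     gmu G x y = gmu G y x /\ 0 <= gmu G x y /\ (0 < gmu G x y <-> gadj G x y)).

Definition gdist (G : graph) (x y : E) : nat :=
  epsilon (inhabits 0%nat)
    (fun k => walk G x y k /\ forall j, walk G x y j -> (k <= j)%nat).

Definition gball (G : graph) (x : E) (r : R) (y : E) : Prop :=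
  gV G y /\ INR (gdist G x y) < r.

Fixpoint lsum (l : list E) (f : E -> R) : R :=
  match l with nil => 0 | a :: l' => f a + lsum l' f end.

Definition gP (G : graph) (x y : E) : R :=
  gmu G x y / lsum (gnb G x) (fun z => gmu G x z).

(** generator L_G f(x) = sum_y P_G(x,y)(f(y)-f(x)); P_G(x,y)=0 off edges *)
Definition gL (G : graph) (f : E -> R) (x : E) : R :=
  lsum (gnb G x) (fun y => gP G x y * (f y - f x)).

Definition caloric (G : graph) (u : nat -> E -> R) (x : E) (Rr T : R) : Prop :=
  forall n : nat, INR n <= T - 1 -> forall y, gball G x Rr y ->
    u (S n) y - u n y = gL G (u n) y.

Definition uhat (u : nat -> E -> R) (n : nat) (y : E) : R := u (S n) y + u n y.

(** PHI with constant CH for Q_G(x,R,T): sup_{Q^-} uhat <= CH inf_{Q^+} uhat,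
    written pointwise. *)
Definition PHI (G : graph) (CH : R) (x : E) (Rr T : R) : Prop :=
  forall u : nat -> E -> R,
    (forall n y, gball G x (Rr + 1) y -> 0 <= u n y) ->
    caloric G u x Rr T ->
    forall n1 y1 n2 y2,
      T / 4 <= INR n1 <= T / 2 -> gball G x (Rr / 2) y1 ->
      3 * T / 4 <= INR n2 < T -> gball G x (Rr / 2) y2 ->
      uhat u n1 y1 <= CH * uhat u n2 y2.

End Defs.

(* Main.v *)
Require Import Defs.
From Stdlib Require Import Reals List Lra Lia ClassicalEpsilon Classical Arith ZArith.
Open Scope R_scope.

Lemma walk_gV_l E (G : graph E) x y k : walk G x y k -> gV G x.
Proof. intros H; destruct H; auto. Qed.

Lemma walk_gV_r E (G : graph E) x y k : walk G x y k -> gV G y.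
Proof. intros H; induction H; auto. Qed.

Lemma walk_app E (G : graph E) x z a : walk G x z a -> forall y b, walk G z y b -> walk G x y (a + b).
Proof. intros H; induction H; intros; simpl; auto. econstructor; eauto. Qed.

Lemma walk_split E (G : graph E) x y k : walk G x y k -> forall j, (j <= k)%nat ->
  exists z, walk G x z j /\ walk G z y (k - j).
Proof.
  intros H; induction H; intros j Hj.
  - assert (j = 0%nat) by lia; subst. exists x; split; constructor; auto.
  - destruct j as [|j].
    + exists x; split. constructor; auto. simpl. econstructor; eauto.
    + destruct (IHwalk j ltac:(lia)) as [w [Hw1 Hw2]]. exists w; split; auto.
      econstructor; eauto.
Qed.

Lemma min_walk E (G : graph E) x y : forall k, walk G x y k ->
  exists m, walk G x y m /\ forall j, walk G x y j -> (m <= j)%nat.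
Proof.
  intro k; induction k as [k IH] using lt_wf_ind; intros Hk.
  destruct (classic (exists j, (j < k)%nat /\ walk G x y j)) as [[j [Hj Hw]]|Hn].
  - eapply IH; eauto.
  - exists k; split; auto. intros j Hj. destruct (Nat.le_gt_cases k j); auto.
    exfalso; apply Hn; eauto.
Qed.

Lemma gdist_spec E (G : graph E) x y k : walk G x y k ->
  walk G x y (gdist G x y) /\ forall j, walk G x y j -> (gdist G x y <= j)%nat.
Proof.
  intros Hk. unfold gdist. apply epsilon_spec. eapply min_walk; eauto.
Qed.

Lemma floor_nat a : 0 <= a -> exists m : nat, INR m <= a < INR m + 1.
Proof.
  intros Ha. destruct (base_Int_part a) as [H1 H2].
  assert (H0 : (0 <= Int_part a)%Z).
  { assert (IZR (Int_part a) > -1) by lra. apply lt_IZR in H. lia. }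
  exists (Z.to_nat (Int_part a)). rewrite INR_IZR_INZ, Z2Nat.id; auto. lra.
Qed.

Arguments gdist_spec {E G x y k}.
Arguments walk_app {E G x z a} _ {y b}.
Arguments walk_split {E G x y k} _ j.
Arguments walk_gV_r {E G x y k}.

Theorem lemma3p3
  (E : Type) (dE : E -> E -> R) (F : E -> Prop) (rho : E)
  (G : nat -> graph E) (alpha gamma : nat -> R) (g : nat -> E -> E)
  (kappa CH c1 : R) (alphat : nat -> R) (s : nat -> E -> nat)
  (Fstar : E -> Prop)
  (* setting *)
  (Hmetric : is_metric dE)
  (HFcpt : forall x r, 0 < r -> compact_set dE (fun y => F y /\ dE x y <= r))
  (HrhoF : F rho)
  (HG : forall n, wf_graph (G n))
  (HrhoV : forall n, gV (G n) rho)
  (Halpha : (forall n, 0 <= alpha n) /\ cv_infty alpha)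
  (Hgamma : (forall n, 0 <= gamma n) /\ cv_infty gamma)
  (Hg : forall n x, gV (G n) (g n x) /\
          forall v, gV (G n) v -> dE x (g n x) <= dE x v)
  (* (A4) *)
  (Hkappa : 2 <= kappa)
  (* (a) *)
  (Hc1 : 0 < c1)
  (Hlow : forall n x y, gV (G n) x -> gV (G n) y ->
            INR (gdist (G n) x y) >= c1 * alpha n * dE x y)
  (Halphat : (forall n, 0 <= alphat n) /\
             (forall e, 0 < e -> exists N, forall n, (N <= n)%nat ->
                 alphat n <= e * alpha n))
  (Hup : forall r, 0 < r -> exists c2 : R, exists n0 : nat,
            forall n x y, (n0 <= n)%nat ->
              gV (G n) x -> dE rho x < r -> gV (G n) y -> dE rho y < r ->
              INR (gdist (G n) x y) <= c2 * alpha n * dE x y + alphat n)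
  (* (b) *)
  (HHaus : forall r, 0 < r ->
             hausdorff_cv dE (fun n y => gV (G n) y /\ dE rho y <= r)
                             (fun y => F y /\ dE rho y <= r))
  (* (c) *)
  (Hs : forall n x, gV (G n) x ->
          (1 <= s n x)%nat /\
          forall Rr, INR (s n x) <= Rr -> PHI (G n) CH x Rr (Rpower Rr kappa))
  (HFstar : (forall x, Fstar x -> F x) /\
            (forall x e, F x -> 0 < e -> exists y, Fstar y /\ dE x y < e))
  (Hsconv : forall x, Fstar x ->
              Un_cv (fun n => INR (s n (g n x)) / alpha n) 0)
  (* (d) *)
  (HO : exists C : R, exists N : nat, forall n, (N <= n)%nat ->
          Rpower (alpha n) kappa <= C * gamma n) :
  forall r eps, 0 < r -> 0 < eps ->
    exists (X : list E) (n0 : nat),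
      (forall x, In x X -> F x /\ dE rho x <= r / c1 /\ Fstar x) /\
      (forall n, (n0 <= n)%nat -> forall y, gball (G n) rho (alpha n * r) y ->
         exists x, In x X /\ gball (G n) (g n x) (alpha n * eps) y).
Proof.
  intros r eps Hr Heps.
  destruct Hmetric as [Hd0 [Hdeq [Hdsym Hdtri]]].
  assert (Hdxx : forall x, dE x x = 0) by (intros; apply Hdeq; auto).
  set (th := Rmin (eps / (4 * c1)) (r / (2 * c1))).
  assert (Hth0 : 0 < th).
  { unfold th; apply Rmin_pos; apply Rdiv_lt_0_compat; lra. }
  assert (Hth1 : th <= eps / (4 * c1)) by apply Rmin_l.
  assert (Hth2 : th <= r / (2 * c1)) by apply Rmin_r.
  assert (Hrc : r / c1 = 2 * (r / (2 * c1))) by (field; lra).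
  set (r1 := r / c1 - th).
  assert (Hr1 : 0 < r1) by (unfold r1; lra).
  destruct (Hup (r / c1 + 1)) as [c2 [nup Hup']].
  { assert (0 < r / c1) by (apply Rdiv_lt_0_compat; lra). lra. }
  set (C2 := Rabs c2 + 1).
  assert (HC2 : 0 < C2) by (unfold C2; pose proof (Rabs_pos c2); lra).
  assert (Hc2C2 : c2 <= C2) by (unfold C2; pose proof (Rle_abs c2); lra).
  set (de := Rmin (Rmin th (1/2)) (eps / (24 * C2))).
  assert (Hde0 : 0 < de).
  { unfold de; repeat apply Rmin_pos; try lra; apply Rdiv_lt_0_compat; lra. }
  assert (Hde1 : de <= th) by (unfold de; eapply Rle_trans; [apply Rmin_l|apply Rmin_l]).
  assert (Hde2 : de <= 1/2) by (unfold de; eapply Rle_trans; [apply Rmin_l|apply Rmin_r]).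
  assert (Hde3 : de <= eps / (24 * C2)) by (unfold de; apply Rmin_r).
  assert (HC2de : C2 * (3 * de) <= eps / 8).
  { apply Rmult_le_reg_l with (/ C2). apply Rinv_0_lt_compat; lra.
    replace (/ C2 * (C2 * (3 * de))) with (3 * de) by (field; lra).
    replace (/ C2 * (eps / 8)) with (3 * (eps / (24 * C2))) by (field; lra). lra. }
  set (I := {x : E | Fstar x /\ dE rho x < r / c1}).
  destruct (HFcpt rho r1 Hr1 I (fun i y => dE (proj1_sig i) y < de)) as [l Hl].
  { intros i y Hy. exists (de - dE (proj1_sig i) y). split; [lra|].
    intros w Hw. pose proof (Hdtri (proj1_sig i) y w). lra. }
  { intros b [Fb Hb]. destruct (proj2 HFstar b de Fb Hde0) as [x [Fx Hx]].
    assert (Hx' : dE rho x < r / c1) by (pose proof (Hdtri rho b x); unfold r1 in Hb; lra).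
    exists (exist _ x (conj Fx Hx')). simpl. rewrite Hdsym; auto. }
  exists (map (@proj1_sig _ _) l).
  destruct (HHaus r1 Hr1) as [_ [_ H1]]. destruct (H1 de Hde0) as [N1 HN1].
  assert (Hrc0 : 0 < r / c1) by (apply Rdiv_lt_0_compat; lra).
  destruct (HHaus (r / c1) Hrc0) as [_ [_ H2]]. destruct (H2 de Hde0) as [N2 HN2].
  destruct (proj2 Halphat (eps / 8) ltac:(lra)) as [N3 HN3].
  destruct (proj2 Halpha (4 / eps)) as [N4 HN4].
  exists (nup + N1 + N2 + N3 + N4)%nat. split.
  { intros x Hx. apply in_map_iff in Hx. destruct Hx as [[x' [Fx Hx]] [<- _]]. simpl.
    repeat split; auto; try lra. apply HFstar; auto. }
  intros n Hn y [Vy Hy].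
  specialize (HN1 n ltac:(lia)). specialize (HN2 n ltac:(lia)).
  specialize (HN3 n ltac:(lia)). specialize (HN4 n ltac:(lia)).
  set (al := alpha n) in *.
  assert (Hal4 : 4 < al * eps).
  { apply Rmult_lt_compat_r with (r := eps) in HN4; auto.
    replace (4 / eps * eps) with 4 in HN4 by (field; lra). lra. }
  assert (Hal : 0 < al).
  { destruct (Rle_or_lt al 0); auto. assert (al * eps <= 0) by nra. lra. }
  destruct (HG n) as [_ [_ [Hconn _]]].
  destruct (Hconn rho y (HrhoV n) Vy) as [k0 Hk0].
  destruct (gdist_spec Hk0) as [Hwk _].
  set (k := gdist (G n) rho y) in *.
  destruct (floor_nat (al * eps / 2)) as [m [Hm1 Hm2]].
  { assert (0 <= al * eps) by lra. lra. }
  destruct (walk_split Hwk (k - m)) as [z [Hz1 Hz2]]; [lia|].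
  assert (Vz : gV (G n) z) by (eapply walk_gV_r; eauto).
  assert (Hdz : (gdist (G n) rho z <= k - m)%nat) by (apply (proj2 (gdist_spec Hz1)); auto).
  assert (Hdzy : (gdist (G n) z y <= m)%nat).
  { eapply Nat.le_trans. apply (proj2 (gdist_spec Hz2)); exact Hz2. clearbody k. lia. }
  assert (Hlz := Hlow n rho z (HrhoV n) Vz); fold al in Hlz.
  assert (Hzr1 : dE rho z <= r1).
  { apply le_INR in Hdz.
    destruct (Nat.le_gt_cases m k) as [Hmk|Hmk].
    - rewrite minus_INR in Hdz; auto.
      assert (c1 * al * dE rho z < al * (r - eps / 4)) by lra.
      assert (c1 * dE rho z < r - eps / 4).
      { apply Rmult_lt_reg_l with al; auto. nra. }
      assert (dE rho z < r / c1 - eps / (4 * c1)).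
      { apply Rmult_lt_reg_l with c1; auto.
        replace (c1 * (r / c1 - eps / (4 * c1))) with (r - eps / 4) by (field; lra). lra. }
      unfold r1; lra.
    - replace (k - m)%nat with 0%nat in Hdz by lia. simpl in Hdz.
      assert (c1 * al * dE rho z <= 0) by lra.
      assert (c1 * al * dE rho z >= 0).
      { pose proof (Hd0 rho z). assert (0 < c1 * al) by nra. nra. }
      assert (dE rho z = 0).
      { pose proof (Hd0 rho z). assert (0 < c1 * al) by nra. nra. }
      lra. }
  destruct (proj1 HN1 z (conj Vz Hzr1)) as [b [[Fb Hb] Hzb]].
  destruct (Hl b (conj Fb Hb)) as [[x [Fx Hx]] [Hin Hxb]]. simpl in Hxb.
  exists x. split.
  { apply in_map_iff. exists (exist _ x (conj Fx Hx)). auto. }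
  destruct (proj2 HN2 x (conj (proj1 HFstar x Fx) (Rlt_le _ _ Hx))) as [v [[Vv Hv] Hvx]].
  destruct (Hg n x) as [Vgx Hgx].
  assert (Hxg : dE x (g n x) < de) by (pose proof (Hgx v Vv); rewrite (Hdsym v x) in Hvx; lra).
  assert (Hgz : dE (g n x) z < 3 * de).
  { pose proof (Hdtri (g n x) x z). pose proof (Hdtri x b z).
    rewrite (Hdsym (g n x) x) in *. rewrite (Hdsym b z) in *. lra. }
  assert (Hrg : dE rho (g n x) < r / c1 + 1) by (pose proof (Hdtri rho x (g n x)); lra).
  assert (Hgd := Hup' n (g n x) z ltac:(lia) Vgx Hrg Vz ltac:(unfold r1 in Hzr1; lra)); fold al in Hgd.
  assert (Hgd2 : INR (gdist (G n) (g n x) z) <= al * eps / 4).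
  { assert (c2 * al * dE (g n x) z <= C2 * al * (3 * de)).
    { pose proof (Hd0 (g n x) z).
      apply Rle_trans with (C2 * al * dE (g n x) z).
      - apply Rmult_le_compat_r; auto. apply Rmult_le_compat_r; lra.
      - apply Rmult_le_compat_l; [nra|lra]. }
    nra. }
  destruct (Hconn (g n x) z Vgx Vz) as [k1 Hk1].
  destruct (gdist_spec Hk1) as [Hw1 _].
  destruct (gdist_spec Hz2) as [Hw2 _].
  assert (Htri : (gdist (G n) (g n x) y <= gdist (G n) (g n x) z + gdist (G n) z y)%nat).
  { apply (proj2 (gdist_spec (walk_app Hw1 Hw2))). apply (walk_app Hw1 Hw2). }
  split; auto.
  apply le_INR in Htri. apply le_INR in Hdzy. rewrite plus_INR in Htri. lra.
Qed.
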